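(* Let $\lambda/\mu$ be a border strip with $n$ cells, let $Q_{\lambda/\mu}$ be its border strip poset, and let $\omega$ be a reversed Schur labeling. Then $$e_q^{\mathrm{inv}}(Q_{\lambda/\mu},\omega)=e_q^{\mathrm{maj}}(Q_{\lambda/\mu},\omega).$$
   Context: English notation: $[\lambda]=\{(i,j):1\le i\le\ell(\lambda),1\le j\le\lambda_i\}$, $[\lambda/\mu]=[\lambda]\setminus[\mu]$, content $c(i,j)=j-i$. A border strip is a skew shape whose diagram is edge-connected with no $2\times2$ square. Its poset $Q_{\lambda/\mu}$ on $[\lambda/\mu]$ has $(i,j)\le(i',j')$ iff $i\ge i'$ and $j\ge j'$. A reversed Schur labeling is a bijection $\omega:[\lambda/\mu]\to[n]$ whose values strictly decrease as the cells are listed in increasing order of content. Each linear extension (order-preserving bijection $g:Q_{\lambda/\mu}\to[n]$) gives the word $\sigma=\omega\circ g^{-1}=\sigma_1\cdots\sigma_n$; $\mathrm{maj}(\sigma)=\sum_{i:\sigma_i>\sigma_{i+1}}i$ and $\mathrm{inv}(\sigma)=\#\{(i,j):i<j,\ \sigma_i>\sigma_j\}$. $e_q^{\mathrm{stat}}(Q_{\lambda/\mu},\omega)=\sum_g q^{\mathrm{stat}(\omega\circ g^{-1})}$ for $\mathrm{stat}\in\{\mathrm{maj},\mathrm{inv}\}$. *)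

(* Defs.v *)
From mathcomp Require Import all_boot all_order all_algebra.
Set Implicit Arguments. Unset Strict Implicit. Unset Printing Implicit Defensive.
Import GRing.Theory.

(* A cell (i, j) : row i, column j, 1-indexed (English notation). *)
Definition cell := (nat * nat)%type.

Definition is_partition (la : seq nat) : bool :=
  sorted geq la && all (fun x => 0 < x) la.

Definition in_diagram (la : seq nat) (c : cell) : bool :=
  [&& 0 < c.1, c.1 <= size la, 0 < c.2 & c.2 <= nth 0 la c.1.-1].

Definition contained (mu la : seq nat) : Prop :=
  forall c : cell, in_diagram mu c -> in_diagram la c.

Definition diagram (la : seq nat) : seq cell :=
  [seq (i, j) | i <- iota 1 (size la), j <- iota 1 (nth 0 la i.-1)].

Definition skew_cells (la mu : seq nat) : seq cell :=
  [seq c <- diagram la | ~~ in_diagram mu c].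

Definition adj (c d : cell) : bool :=
  ((c.1 == d.1) && ((c.2 == d.2.+1) || (d.2 == c.2.+1))) ||
  ((c.2 == d.2) && ((c.1 == d.1.+1) || (d.1 == c.1.+1))).

Definition edge_connected (cs : seq cell) : Prop :=
  forall c d, c \in cs -> d \in cs ->
    exists p : seq cell, [/\ path adj c p, last c p = d & all (mem cs) p].

Definition no_2x2_square (cs : seq cell) : Prop :=
  ~ exists i j, [/\ (i, j) \in cs, (i.+1, j) \in cs, (i, j.+1) \in cs
                  & (i.+1, j.+1) \in cs].

Definition border_strip (la mu : seq nat) : Prop :=
  [/\ is_partition la, is_partition mu, contained mu la,
      edge_connected (skew_cells la mu) & no_2x2_square (skew_cells la mu)].

Definition content (c : cell) : int := (c.2%:Z - c.1%:Z)%R.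

Definition leQ (c d : cell) : bool := (d.1 <= c.1) && (d.2 <= c.2).

Definition reversed_schur_labeling (la mu : seq nat) (n : nat)
    (om : cell -> nat) : Prop :=
  perm_eq [seq om c | c <- skew_cells la mu] (iota 1 n) /\
  (forall c d, c \in skew_cells la mu -> d \in skew_cells la mu ->
     (content c < content d)%R -> om d < om c).

(* A linear extension g : Q -> [n] is encoded by the listing g^{-1}(1), ...,
   g^{-1}(n) of the cells, i.e. a permutation s of the cells with
   g(c) = index c s + 1; g is order preserving iff the condition below holds. *)
Definition is_linext (cs : seq cell) (s : seq cell) : bool :=
  perm_eq s cs &&
  all (fun c => all (fun d => leQ c d ==> (index c s <= index d s)) cs) cs.

Definition linexts (cs : seq cell) : seq (seq cell) :=
  [seq s <- permutations cs | is_linext cs s].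

(* Statistics on words (positions 1-indexed). *)
Definition maj_stat (w : seq nat) : nat :=
  \sum_(0 <= i < (size w).-1 | nth 0 w i.+1 < nth 0 w i) i.+1.

Definition inv_stat (w : seq nat) : nat :=
  \sum_(0 <= i < size w) \sum_(i.+1 <= j < size w) (nth 0 w j < nth 0 w i).

Definition e_q (stat : seq nat -> nat) (la mu : seq nat) (om : cell -> nat)
  : {poly int} :=
  \sum_(s <- linexts (skew_cells la mu)) 'X^(stat [seq om c | c <- s]).

(* Main.v *)
Require Import Defs.
From mathcomp Require Import all_boot all_order all_algebra.
From mathcomp Require Import zify.
Set Implicit Arguments. Unset Strict Implicit. Unset Printing Implicit Defensive.
Import GRing.Theory.


Section Gam.
Variable T : eqType.
Variable p : pred T.

Fixpoint gam_aux (buf w : seq T) : seq T :=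
  match w with
  | [::] => buf
  | y :: w' => if p y then y :: buf ++ gam_aux [::] w' else gam_aux (rcons buf y) w'
  end.

Definition endp (w : seq T) := if w is z :: w' then p (last z w') else true.

Lemma endp_rcons s y : endp (rcons s y) = p y.
Proof. by case: s => [|z s] //=; rewrite last_rcons. Qed.

Lemma gam_first N y rest buf : all (predC p) N -> p y ->
  gam_aux buf (N ++ y :: rest) = y :: buf ++ N ++ gam_aux [::] rest.
Proof.
elim: N buf => [|z N IH] buf /=; first by move=> _ ->.
case/andP=> Hz HN Hy; rewrite (negbTE Hz) IH //.
by rewrite cat_rcons.
Qed.

Lemma endp_decomp u : u != [::] -> endp u ->
  exists N y rest, [/\ u = N ++ y :: rest, all (predC p) N, p y & endp rest].
Proof.
elim: u => [|z u IH] //= _ Hl.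
case Hz: (p z).
  exists [::], z, u; split => //.
  by case: u Hl {IH} => [|w u] //=.
case: u IH Hl => [|w u] IH /=; first by rewrite Hz.
move=> Hl; have [N [y [rest [E HN Hy Hr]]]] := IH isT Hl.
exists (z :: N), y, rest; split => //=; first by rewrite E.
by rewrite Hz.
Qed.

Lemma gam_ind (P : seq T -> Prop) : P [::] ->
  (forall N y rest, all (predC p) N -> p y -> endp rest -> P rest -> P (N ++ y :: rest)) ->
  forall u, endp u -> P u.
Proof.
move=> P0 PS u; have [n] := ubnP (size u); elim: n u => [|n IH] u //.
case: (eqVneq u [::]) => [-> //|un0] Hs Hu.
have [N [y [rest [E HN Hy Hr]]]] := endp_decomp un0 Hu.
rewrite E; apply: PS => //; apply: IH => //.
move: Hs; rewrite E size_cat /=; lia.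
Qed.

Lemma gam_cons N y rest : all (predC p) N -> p y ->
  gam_aux [::] (N ++ y :: rest) = y :: N ++ gam_aux [::] rest.
Proof. by move=> HN Hy; rewrite gam_first. Qed.

Lemma gam_cat A B : endp A -> gam_aux [::] (A ++ B) = gam_aux [::] A ++ gam_aux [::] B.
Proof.
move=> HA; pattern A; apply: (gam_ind _ _ HA) => // N y rest HN Hy Hr IH.
by rewrite -catA cat_cons !gam_cons // IH catA.
Qed.

Lemma endp_rev_gam u : endp u -> endp (rev (gam_aux [::] u)).
Proof.
move=> Hu; pattern u; apply: (gam_ind _ _ Hu) => // N y rest HN Hy _ _.
by rewrite gam_cons // rev_cons endp_rcons.
Qed.

Lemma gam_invol u : endp u -> gam_aux [::] (rev (gam_aux [::] u)) = rev u.
Proof.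
move=> Hu; pattern u; apply: (gam_ind _ _ Hu) => // N y rest HN Hy Hr IH.
rewrite gam_cons // rev_cons rev_cat -cats1 -catA gam_cat; last exact: endp_rev_gam.
rewrite IH gam_cons //=; last by rewrite all_rev.
by rewrite cats0 rev_cat rev_cons cat_rcons.
Qed.

Lemma perm_gam buf w : perm_eq (gam_aux buf w) (buf ++ w).
Proof.
elim: w buf => [|y w IH] buf /=; first by rewrite cats0.
case: (p y).
  apply: (@perm_trans _ (y :: buf ++ w)); first by rewrite perm_cons perm_cat2l IH.
  by rewrite -cat1s (perm_catCA [:: y] buf w) -cat1s perm_refl.
by rewrite -cat_rcons; apply: IH.
Qed.

Lemma filter_gam (q : pred T) buf w :
  (forall y z, p y -> ~~ p z -> q y -> q z = false) ->
  all (predC p) buf ->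
  filter q (gam_aux buf w) = filter q (buf ++ w).
Proof.
move=> Hq; elim: w buf => [|y w IH] buf Hb /=; first by rewrite cats0.
case Hy: (p y).
  rewrite /= !filter_cat IH //=.
  case Qy: (q y); last by [].
  have -> : filter q buf = [::].
    apply/eqP; rewrite -(negbK (_ == _)) -has_filter; apply/hasPn => z Hz.
    by move/allP: Hb => /(_ z Hz) /= Hpz; rewrite (Hq y z).
  by [].
rewrite IH; first by rewrite cat_rcons.
by rewrite all_rcons /= Hy.
Qed.

End Gam.


Lemma index_cons (T : eqType) (y a : T) s : index a (y :: s) = if y == a then 0 else (index a s).+1.
Proof. by []. Qed.

Lemma index_filter (T : eqType) (q : pred T) (u : seq T) a b : q a -> q b ->
  (index a (filter q u) < index b (filter q u)) = (index a u < index b u).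
Proof.
move=> Qa Qb; elim: u => [|y u IH] //.
case Qy: (q y); rewrite [filter q (y :: u)]/= Qy !index_cons.
  by case: (y == a); case: (y == b) => //=; rewrite ltnS.
have nya : y != a by apply/eqP => E; rewrite E Qa in Qy.
have nyb : y != b by apply/eqP => E; rewrite E Qb in Qy.
by rewrite (negbTE nya) (negbTE nyb) ltnS.
Qed.

Lemma index_rcons_in (T : eqType) (s : seq T) x a : a \in s -> index a (rcons s x) = index a s.
Proof. by move=> Ha; rewrite -cats1 index_cat Ha. Qed.

Section Phi.
Variable T : eqType.
Variable k : T -> nat.

Definition side (x : T) (u : seq T) : pred T :=
  if k x < k (last x u) then (fun y => k x < k y) else (fun y => k y <= k x).
Definition gam x u := gam_aux (side x u) [::] u.
Definition phi (s : seq T) := foldl (fun u x => rcons (gam x u) x) [::] s.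

Lemma phi_rcons s x : phi (rcons s x) = rcons (gam x (phi s)) x.
Proof. by rewrite /phi foldl_rcons. Qed.

Lemma perm_phi s : perm_eq (phi s) s.
Proof.
elim/last_ind: s => [|s x IH] //; rewrite phi_rcons -!cats1 perm_cat2r.
exact: perm_trans (perm_gam _ [::] _) IH.
Qed.

Lemma size_phi s : size (phi s) = size s.
Proof. exact: perm_size (perm_phi s). Qed.

Lemma last_phi s x : last x (phi s) = last x s.
Proof. by elim/last_ind: s => [|s y _] //; rewrite phi_rcons !last_rcons. Qed.

Lemma endp_side x u : endp (side x u) u.
Proof.
case: u => [|z u] //=; rewrite /side /=; case: ifP => //= /negbT.
by rewrite -leqNgt.
Qed.

Lemma gam_index x u a b : side x u a = side x u b ->
  (index a (gam x u) < index b (gam x u)) = (index a u < index b u).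
Proof.
move=> Hab; pose q := fun z => side x u z == side x u a.
have Qa : q a by rewrite /q eqxx.
have Qb : q b by rewrite /q Hab eqxx.
rewrite -(index_filter _ Qa Qb) /gam (filter_gam (q := q)) //.
  by rewrite index_filter.
move=> y z Hy Hz; rewrite /q => /eqP Qy; apply/eqP => Qz.
by move: Hz; rewrite Qz -Qy Hy.
Qed.

Lemma side_eq x u a b : ~~ ((k a < k x < k b) || (k b < k x < k a)) ->
  k x != k a -> k x != k b -> side x u a = side x u b.
Proof. by move=> H1 H2 H3; rewrite /side; case: ifP => _; apply/idP/idP => h; lia. Qed.

Lemma phi_order s a b : uniq s -> {in s &, injective k} -> a \in s -> b \in s ->
  index a s < index b s ->
  (forall e, e \in s -> (k a < k e < k b) || (k b < k e < k a) -> index e s < index b s) ->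
  index a (phi s) < index b (phi s).
Proof.
elim/last_ind: s => [|s x IH] // Hu Hk Ha Hb Hab He.
move: (Hu); rewrite rcons_uniq => /andP [xns us].
have perm1 : perm_eq (gam x (phi s)) s.
  exact: perm_trans (perm_gam _ [::] _) (perm_phi s).
rewrite phi_rcons.
case: (eqVneq b x) => [Ebx|nbx].
  subst b.
  have nax : a != x by apply/eqP => E; rewrite E ltnn in Hab.
  have as' : a \in s by move: Ha; rewrite mem_rcons in_cons (negbTE nax).
  have aG : a \in gam x (phi s) by rewrite (perm_mem perm1).
  have xG : x \notin gam x (phi s) by rewrite (perm_mem perm1).
  rewrite index_rcons_in // -cats1 index_cat (negbTE xG) /= eqxx addn0.
  by move: aG; rewrite -index_mem.
have bs : b \in s by move: Hb; rewrite mem_rcons in_cons (negbTE nbx).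
have nax : a != x.
  apply/eqP => E; subst a.
  move: Hab; rewrite (index_rcons_in _ bs) -cats1 index_cat (negbTE xns) /= eqxx addn0.
  by rewrite ltnNge ltnW // index_mem.
have as' : a \in s by move: Ha; rewrite mem_rcons in_cons (negbTE nax).
have bG : b \in gam x (phi s) by rewrite (perm_mem perm1).
have aG : a \in gam x (phi s) by rewrite (perm_mem perm1).
rewrite !index_rcons_in //.
rewrite !index_rcons_in // in Hab.
have xin : x \in rcons s x by rewrite mem_rcons mem_head.
have sub : {subset s <= rcons s x} by move=> z zs; rewrite mem_rcons in_cons zs orbT.
have Hk' := sub_in2 sub Hk.
have IH' : index a (phi s) < index b (phi s).
  apply: IH => // e es Hbet; have := He e (sub e es) Hbet.
  by rewrite !index_rcons_in.
have xnb : ~~ ((k a < k x < k b) || (k b < k x < k a)).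
  apply/negP => Hbet; have := He x xin Hbet.
  rewrite (index_rcons_in _ bs) -cats1 index_cat (negbTE xns) /= eqxx addn0.
  by rewrite ltnNge ltnW // index_mem.
have kxa : k x != k a.
  by apply/eqP => E; move/eqP: nax; apply; symmetry; exact: Hk E.
have kxb : k x != k b.
  by apply/eqP => E; move/eqP: nbx; apply; symmetry; exact: Hk E.
have Hside : side x (phi s) a = side x (phi s) b by apply: side_eq.
by rewrite gam_index.
Qed.

End Phi.


Section Inj.
Variable T : eqType.
Variable k : T -> nat.

Lemma gam_head x U : U != [::] -> exists y G, gam k x U = y :: G /\ side k x U y.
Proof.
move=> Un0; have [N [y [rest [E HN Hy Hr]]]] := endp_decomp Un0 (endp_side k x U).
by exists y, (N ++ gam_aux (side k x U) [::] rest); rewrite /gam {2}E gam_cons.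
Qed.

Lemma size_gam x U : size (gam k x U) = size U.
Proof. exact: perm_size (perm_gam _ [::] _). Qed.

Lemma gam_inj x U V : gam k x U = gam k x V -> U = V.
Proof.
move=> E.
case: (eqVneq U [::]) => [U0|Un0].
  by subst U; move: (size_gam x V); rewrite -E /=; case: V {E}.
have Vn0 : V != [::].
  by apply/eqP => V0; subst V; move: (size_gam x U); rewrite E /=; case: U Un0 {E}.
have [y [G [EU HU]]] := gam_head x Un0.
have [y' [G' [EV HV]]] := gam_head x Vn0.
rewrite EU EV in E; case: E => Ey EG; subst y'.
have Es : side k x U = side k x V.
  move: HU HV; rewrite /side.
  case: ifP; case: ifP => //= _ _; lia.
apply: (can_inj revK).
rewrite -(gam_invol (endp_side k x U)) -(gam_invol (endp_side k x V)).
by move: EU EV; rewrite /gam Es => -> ->; rewrite EG.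
Qed.

Lemma phi_inj : injective (phi k).
Proof.
move=> s; elim/last_ind: s => [|s x IH] t E.
  by move: (size_phi k t); rewrite -E /=; case: t {E}.
case/lastP: t E => [|t z] E.
  by move: (size_phi k (rcons s x)); rewrite E size_rcons.
rewrite !phi_rcons in E; case/rcons_inj: E => E1 Exz; subst z.
by rewrite (IH t (gam_inj E1)).
Qed.
End Inj.

Lemma map_gam_aux (T1 T2 : eqType) (f : T1 -> T2) (p1 : pred T1) (p2 : pred T2) buf w :
  (forall y, p1 y = p2 (f y)) ->
  map f (gam_aux p1 buf w) = gam_aux p2 (map f buf) (map f w).
Proof.
move=> Hp; elim: w buf => [|y w IH] buf //=.
rewrite -Hp; case: (p1 y); first by rewrite /= map_cat IH.
by rewrite IH map_rcons.
Qed.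

Lemma map_phi (T : eqType) (k : T -> nat) s : map k (phi k s) = phi id (map k s).
Proof.
elim/last_ind: s => [|s x IH] //.
rewrite phi_rcons !map_rcons phi_rcons -IH; congr rcons.
rewrite /gam (map_gam_aux (p2 := side id (k x) (map k (phi k s)))) //.
by move=> y; rewrite /side /= (last_map k); case: ifP.
Qed.


Fixpoint invr (w : seq nat) : nat :=
  if w is a :: w' then count (fun z => z < a) w' + invr w' else 0.
Fixpoint cross (A B : seq nat) : nat :=
  if A is a :: A' then count (fun z => z < a) B + cross A' B else 0.

Lemma invr_cat A B : invr (A ++ B) = invr A + invr B + cross A B.
Proof.
elim: A => [|a A IH]; first by rewrite /= addn0.
rewrite cat_cons [invr (a :: _)]/= [invr (a :: A)]/= [cross (a :: A) _]/= count_cat IH; lia.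
Qed.

Lemma cross_cons A y B : cross A (y :: B) = count (fun a => y < a) A + cross A B.
Proof. elim: A => [|a A IH] //=; rewrite IH; lia. Qed.

Lemma cross_nil A : cross A [::] = 0.
Proof. by elim: A. Qed.

Lemma cross_perm A B B' : perm_eq B B' -> cross A B = cross A B'.
Proof. move/permP=> H; elim: A => [|a A IH] //=; by rewrite IH H. Qed.

Lemma invr_rcons G x : invr (rcons G x) = invr G + count (fun a => x < a) G.
Proof. by rewrite -cats1 invr_cat cross_cons cross_nil /=; lia. Qed.

Lemma count_all (T : Type) (P : pred T) N : all P N -> count P N = size N.
Proof. elim: N => [|a N IH] //= /andP [-> /IH ->]; lia. Qed.

Lemma count_none (T : Type) (P : pred T) N : all (predC P) N -> count P N = 0.
Proof. elim: N => [|a N IH] //= /andP [/negbTE -> /IH ->]; lia. Qed.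

Lemma gamA x u : endp (fun y => x < y) u ->
  invr (gam_aux (fun y => x < y) [::] u) = invr u + count (fun z => z <= x) u.
Proof.
move=> Hu; pattern u; apply: (gam_ind _ _ Hu) => // N y rest HN Hy Hr IH; move: (Hy) => /= Hy0.
rewrite gam_cons //= !invr_cat /= IH count_cat cross_cons.
rewrite (cross_perm N (perm_gam _ [::] rest)) /=.
have /permP Hc := perm_gam (fun y => x < y) [::] rest.
rewrite Hc /= count_cat /=.
have HN' : all (fun z => z <= x) N by apply: sub_all HN => z /=; rewrite -leqNgt.
have H1 : count (fun z => z < y) N = size N.
  by apply: count_all; apply: sub_all HN' => z /= ?; lia.
have H2 : count (fun z => y < z) N = 0.
  by apply: count_none; apply: sub_all HN' => z /= ?; lia.
have H3 : count (fun z => z <= x) N = size N by apply: count_all.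
have H4 : (y <= x) = false by apply/negbTE; rewrite -ltnNge.
rewrite H1 H2 H3 H4; lia.
Qed.

Lemma gamB x u : endp (fun y => y <= x) u ->
  invr (gam_aux (fun y => y <= x) [::] u) + count (fun z => x < z) u = invr u.
Proof.
move=> Hu; pattern u; apply: (gam_ind _ _ Hu) => // N y rest HN Hy Hr IH; move: (Hy) => /= Hy0.
rewrite gam_cons //= !invr_cat /= count_cat cross_cons.
rewrite (cross_perm N (perm_gam _ [::] rest)) /=.
have /permP Hc := perm_gam (fun y => y <= x) [::] rest.
rewrite Hc /= count_cat /=.
have HN' : all (fun z => x < z) N by apply: sub_all HN => z /=; rewrite -ltnNge.
have H1 : count (fun z => z < y) N = 0.
  by apply: count_none; apply: sub_all HN' => z /= ?; lia.
have H2 : count (fun z => y < z) N = size N.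
  by apply: count_all; apply: sub_all HN' => z /= ?; lia.
have H3 : count (fun z => x < z) N = size N by apply: count_all.
have H4 : (x < y) = false by apply/negbTE; rewrite -leqNgt.
rewrite H1 H2 H3 H4 -IH; set g := invr (gam_aux _ _ rest); lia.
Qed.


Lemma maj_rcons w x : maj_stat (rcons w x) = maj_stat w + (if x < last x w then size w else 0).
Proof.
case: w => [|y w]; first by rewrite /maj_stat /= !big_geq // ltnn.
rewrite /maj_stat size_rcons /= big_mkcond big_nat_recr //= [in RHS]big_mkcond.
congr (_ + _).
  apply: eq_big_nat => i /andP [_ Hi].
  rewrite nth_rcons Hi; case: i Hi => [|i] Hi //=.
  by rewrite nth_rcons; have -> : i < size w by lia.
rewrite nth_rcons ltnn eqxx.
case: w => [|z w] //=.
by rewrite -rcons_cons nth_rcons /= ltnSn; have := nth_last 0 (z :: w); rewrite /= => ->.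
Qed.

Lemma invr_phi w : invr (phi id w) = maj_stat w.
Proof.
elim/last_ind: w => [|w x IH]; first by rewrite /maj_stat /= big_geq.
rewrite phi_rcons maj_rcons -IH invr_rcons.
have Hc := permP (perm_gam (side id x (phi id w)) [::] (phi id w)) (fun a => x < a).
rewrite /gam Hc /=.
have E := endp_side id x (phi id w).
have Hs := size_phi id w.
have Hcp := count_predC (fun z => z <= x) (phi id w).
have Hcq : count (predC (fun z => z <= x)) (phi id w) = count (fun a => x < a) (phi id w).
  by apply: eq_count => z /=; rewrite ltnNge.
move: E; rewrite /side /= last_phi; case: ifP => Hlt E.
  by rewrite gamA // -Hcq -addnA Hcp Hs.
by rewrite addn0 (gamB E).
Qed.

Lemma sum_count (P : pred nat) w : \sum_(0 <= j < size w) (P (nth 0 w j) : nat) = count P w.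
Proof.
elim: w => [|a w IH]; first by rewrite big_geq.
by rewrite /= big_nat_recl //= IH.
Qed.

Lemma inv_statE w : inv_stat w = invr w.
Proof.
elim: w => [|a w IH]; first by rewrite /inv_stat big_geq.
rewrite /inv_stat /= big_nat_recl // big_add1 /= (sum_count (fun z => z < a)) -IH.
congr (_ + _); apply: eq_big_nat => i _.
by rewrite big_add1.
Qed.


Lemma mem_diagram la c : (c \in diagram la) = in_diagram la c.
Proof.
rewrite /diagram; apply/allpairsPdep/idP.
  move=> [i [j [Hi Hj ->]]]; move: Hi Hj; rewrite !mem_iota /in_diagram /= => Hi Hj.
  apply/and4P; split; lia.
case: c => i j /and4P [/= H1 H2 H3 H4]; exists i, j; split => //; rewrite mem_iota; lia.
Qed.

Lemma mem_skew la mu c : (c \in skew_cells la mu) = in_diagram la c && ~~ in_diagram mu c.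
Proof. by rewrite mem_filter mem_diagram andbC. Qed.

Lemma part_mono la i j : is_partition la -> i <= j -> j < size la -> nth 0 la j <= nth 0 la i.
Proof.
move=> /andP [Hs _] Hij Hj.
have Ht : transitive geq by move=> a b c h1 h2; exact: leq_trans h2 h1.
apply: (sorted_leq_nth Ht leqnn 0 Hs) => //; rewrite inE /=; lia.
Qed.

Lemma convex la mu u v r t : is_partition la -> is_partition mu ->
  u \in skew_cells la mu -> v \in skew_cells la mu ->
  u.1 <= r <= v.1 -> u.2 <= t <= v.2 -> (r, t) \in skew_cells la mu.
Proof.
move=> Pla Pmu; case: u => u1 u2; case: v => v1 v2.
rewrite !mem_skew /in_diagram /= => /andP [/and4P [A1 A2 A3 A4] A5] /andP [/and4P [B1 B2 B3 B4] _].
move=> /andP [R1 R2] /andP [T1 T2].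
have M1 : nth 0 la v1.-1 <= nth 0 la r.-1 by apply: part_mono => //; lia.
apply/andP; split; first by apply/and4P; split; lia.
apply/negP => /and4P [C1 C2 C3 C4].
have M2 : nth 0 mu r.-1 <= nth 0 mu u1.-1 by apply: part_mono => //; lia.
move/negP: A5; apply; apply/and4P; split; lia.
Qed.

Lemma content_lt (c d : cell) : (content c < content d)%R = (c.2 + d.1 < d.2 + c.1).
Proof. by rewrite /content; apply/idP/idP => h; lia. Qed.

Lemma content_eq (c d : cell) : (content c = content d) -> (c.2 + d.1 = d.2 + c.1).
Proof. by rewrite /content => h; lia. Qed.

Section Geom.
Variables (la mu : seq nat).
Hypothesis Pla : is_partition la.
Hypothesis Pmu : is_partition mu.
Hypothesis Hsq : no_2x2_square (skew_cells la mu).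
Local Notation cs := (skew_cells la mu).

Lemma no_rect u v : u \in cs -> v \in cs -> u.1 < v.1 -> u.2 < v.2 -> False.
Proof.
move=> Hu Hv H1 H2; apply: Hsq; exists u.1, u.2.
have C := convex Pla Pmu Hu Hv.
split; apply: C; lia.
Qed.

Lemma content_inj u v : u \in cs -> v \in cs -> content u = content v -> u = v.
Proof.
move=> Hu Hv /content_eq; case: u Hu => u1 u2 Hu; case: v Hv => v1 v2 Hv /= E.
case: (ltngtP u1 v1) => H1.
- by exfalso; apply: (no_rect Hu Hv) => /=; lia.
- by exfalso; apply: (no_rect Hv Hu) => /=; lia.
- by congr pair; lia.
Qed.

Variable om : cell -> nat.
Hypothesis Hom : forall c d, c \in cs -> d \in cs -> (content c < content d)%R -> om d < om c.

Lemma om_lt e d : e \in cs -> d \in cs -> om e < om d -> d.2 + e.1 < e.2 + d.1.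
Proof.
move=> He Hd Hlt; rewrite -content_lt.
case: (Order.TotalTheory.ltgtP (content d) (content e)) => // H.
- by have := Hom He Hd H; lia.
- by move: Hlt; rewrite (content_inj He Hd (esym H)) ltnn.
Qed.

Lemma om_inj : {in cs &, injective om}.
Proof.
move=> c d Hc Hd E.
case: (Order.TotalTheory.ltgtP (content c) (content d)) => H.
- by have := Hom Hc Hd H; lia.
- by have := Hom Hd Hc H; lia.
- exact: content_inj.
Qed.

Lemma key c d e : c \in cs -> d \in cs -> e \in cs -> leQ c d -> c != d ->
  (om c < om e < om d) || (om d < om e < om c) -> leQ e d.
Proof.
move=> Hc Hd He /andP [L1 L2] ncd Hbet.
case: c d Hc Hd L1 L2 ncd Hbet => [c1 c2] [d1 d2] /= Hc Hd L1 L2 ncd Hbet.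
case: (ltngtP d1 c1) => E1; last first.
- subst d1.
  have E2 : d2 < c2 by case: (ltngtP d2 c2) ncd => // H; [move=> _; exfalso; lia | rewrite H eqxx].
  have Hcd : om (c1, c2) < om (c1, d2) by apply: Hom => //; rewrite content_lt /=; lia.
  have [Hb1 Hb2] : om (c1, c2) < om e /\ om e < om (c1, d2).
    case/orP: Hbet => /andP [h1 h2] //.
    by move: (ltn_trans h1 (ltn_trans h2 Hcd)); rewrite ltnn.
  have X1 := om_lt He Hd Hb2.
  have X2 := om_lt Hc He Hb1.
  case: e He X1 X2 {Hb1 Hb2 Hbet} => e1 e2 /= He X1 X2.
  have Hf := convex Pla Pmu (r := c1) (t := e2 + c1 - e1) Hd Hc.
  have Hf' : (c1, e2 + c1 - e1) \in cs by apply: Hf => /=; lia.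
  have Ef : (c1, e2 + c1 - e1) = (e1, e2).
    apply: content_inj => //; rewrite /content /=; lia.
  case: Ef => Ee1 Ee2; rewrite /leQ /=; apply/andP; split; lia.
- by exfalso; lia.
- case: (ltngtP d2 c2) => E2.
  + by exfalso; apply: (no_rect Hd Hc E1 E2).
  + by exfalso; lia.
  subst d2.
  have Hcd : om (d1, c2) < om (c1, c2) by apply: Hom => //; rewrite content_lt /=; lia.
  have [Hb1 Hb2] : om (d1, c2) < om e /\ om e < om (c1, c2).
    case/orP: Hbet => /andP [h1 h2] //.
    by move: (ltn_trans h1 (ltn_trans h2 Hcd)); rewrite ltnn.
  have X1 := om_lt He Hc Hb2.
  have X2 := om_lt Hd He Hb1.
  case: e He X1 X2 {Hb1 Hb2 Hbet} => e1 e2 /= He X1 X2.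
  have Hf := convex Pla Pmu (r := c2 + e1 - e2) (t := c2) Hd Hc.
  have Hf' : (c2 + e1 - e2, c2) \in cs by apply: Hf => /=; lia.
  have Ef : (c2 + e1 - e2, c2) = (e1, e2).
    apply: content_inj => //; rewrite /content /=; lia.
  case: Ef => Ee1 Ee2; rewrite /leQ /=; apply/andP; split; lia.
Qed.
End Geom.


Lemma map_inj_sub (T1 T2 : eqType) (f : T1 -> T2) (A : seq T1) s t :
  {in A &, injective f} -> {subset s <= A} -> {subset t <= A} -> map f s = map f t -> s = t.
Proof.
move=> Hf; elim: s t => [|a s IH] [|b t] //= Hs Ht [E1 E2].
have Ha : a \in A by apply: Hs; rewrite mem_head.
have Hb : b \in A by apply: Ht; rewrite mem_head.
rewrite (Hf _ _ Ha Hb E1) (IH t) // => z Hz.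
  by apply: Hs; rewrite in_cons Hz orbT.
by apply: Ht; rewrite in_cons Hz orbT.
Qed.

Lemma index_lt_neq (T : eqType) (s : seq T) c d : c \in s -> c != d ->
  index c s <= index d s -> index c s < index d s.
Proof.
move=> Hc ncd Hle; rewrite ltn_neqAle Hle andbT; apply/eqP => E.
move/eqP: ncd; apply.
by rewrite -(nth_index c Hc) E nth_index // -index_mem -E index_mem.
Qed.

Unset Implicit Arguments.
Theorem corollary7p2 (la mu : seq nat) (n : nat) (om : cell -> nat) :
  border_strip la mu ->
  size (skew_cells la mu) = n ->
  reversed_schur_labeling la mu n om ->
  e_q inv_stat la mu om = e_q maj_stat la mu om.
Proof.
move=> [Pla Pmu _ _ Hsq] _ [Hperm Hom].
set cs := skew_cells la mu.
have ucs_om : uniq (map om cs) by rewrite (perm_uniq Hperm) iota_uniq.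
have ucs : uniq cs := map_uniq ucs_om.
have oinj : {in cs &, injective om} := om_inj Pla Pmu Hsq Hom.
set L := linexts cs.
have eqE : forall stat, e_q stat la mu om = (\sum_(w <- map (map om) L) 'X^(stat w))%R.
  by move=> stat; rewrite /e_q big_map.
rewrite !eqE.
set W := map (map om) L.
pose Phi := phi (id : nat -> nat).
have memL : forall s, (s \in L) = perm_eq s cs && is_linext cs s.
  by move=> s; rewrite mem_filter mem_permutations andbC /is_linext; case: (perm_eq s cs).
have PhiW : forall w, w \in W -> Phi w \in W.
  move=> w /mapP [s Hs ->]; rewrite /Phi -map_phi; apply: map_f.
  move: Hs; rewrite !memL => /andP [Hsp /andP [_ Hlin]].
  have Hp : perm_eq (phi om s) cs := perm_trans (perm_phi om s) Hsp.
  rewrite Hp /is_linext Hp /=.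
  have us : uniq s by rewrite (perm_uniq Hsp).
  have subs : {subset s <= cs} by move=> z; rewrite (perm_mem Hsp).
  have Hle : forall c d, c \in cs -> d \in cs -> leQ c d -> index c s <= index d s.
    move=> c d Hc Hd Hcd; move/allP: Hlin => /(_ c Hc) /allP /(_ d Hd).
    by rewrite Hcd.
  apply/allP => c Hc; apply/allP => d Hd; apply/implyP => Hcd.
  case: (eqVneq c d) => [->//|ncd].
  have Hcs : c \in s by rewrite (perm_mem Hsp).
  have Hds : d \in s by rewrite (perm_mem Hsp).
  apply: ltnW; apply: phi_order => //.
  - by move=> x y Hx Hy; apply: oinj; apply: subs.
  - by apply: index_lt_neq => //; apply: Hle.
  move=> e Hes Hbet.
  have Hec : e \in cs by apply: subs.
  have Hed : leQ e d := key Pla Pmu Hsq Hom Hc Hd Hec Hcd ncd Hbet.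
  apply: index_lt_neq => //; last exact: Hle.
  by apply/eqP => E; subst e; move: Hbet; rewrite ltnn /= andbF.
have uL : uniq L by rewrite filter_uniq // permutations_uniq.
have uW : uniq W.
  rewrite map_inj_in_uniq // => s t Hs Ht.
  move: Hs Ht; rewrite !memL => /andP [Hs _] /andP [Ht _].
  apply: (map_inj_sub oinj) => z; [by rewrite (perm_mem Hs) | by rewrite (perm_mem Ht)].
have permW : perm_eq (map Phi W) W.
  have uPW : uniq (map Phi W) by rewrite map_inj_uniq //; exact: phi_inj.
  have sub : {subset map Phi W <= W} by move=> w' /mapP [w Hw ->]; exact: PhiW.
  have Hsz : size W <= size (map Phi W) by rewrite size_map.
  have [_ Heq] := uniq_min_size uPW sub Hsz.
  exact: uniq_perm uPW uW Heq.
rewrite -(perm_big _ permW) big_map.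
apply: eq_bigr => w _.
by rewrite inv_statE invr_phi.
Qed.
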